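(* Let $p$ be a prime and $n,k$ positive integers with $(p,k-1)=1$ and $n=\mathrm{ind}_p(k)$; let $G=G(p,n,k)=\langle a,b;\ a^p=1,\ b^n=1,\ b^{-1}ab=a^k\rangle$. Then $\mathrm{P}(G)$ and $\Lambda(G)$ are complete, i.e. $\Sigma_G(R)$ and $\Sigma_G(L)$ are complete, where $R=\{k^j-1\bmod p:j\in\mathbb{Z}_n\}$ and $L=\{1-k^j\bmod p: j\in\mathbb{Z}_n\}$.
   Context: $\mathrm{ind}_p(k)$ is the least positive integer $d$ with $k^d\equiv 1\pmod p$. Elements of $G$ are written uniquely as $a^ib^j$; $k_t=k^t-1\pmod p$. Commutators are $[x,y]=x^{-1}y^{-1}xy$; $(x)\rho(g)=[x,g]$, $(x)\lambda(g)=[g,x]$; maps are written on the right and composed left to right. $\mathrm{P}(G)$, $\Lambda(G)$ are the semigroups generated by all $\rho(g)$, resp. all $\lambda(g)$; they equal $\Sigma_G(R)$ and $\Sigma_G(L)$. For $x,y\in\mathbb{Z}_p$, $(a^ib^j)\mu(x,y)=a^{xik^j-yk_j}$, $C(x,y)=\{\mu(x,yz):z\in\mathbb{Z}_p\}$. $S^*$ is the multiplicative subsemigroup of $\mathbb{Z}_p$ generated by $S$; $\Sigma_G(S)$ is the semigroup generated by $\{\mu(s,z):s\in S,z\in\mathbb{Z}_p\}$. For $x\in S^*$, $Y(x)=\{s^*z: s^*\in S^*, z\in\mathbb{Z}_p, \exists s\in S,\ x\equiv ss^*\}$; the $x$-family $\{C(x,y):y\in Y(x)\}$ is complete if it contains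 $C(x,1)$, and $\Sigma_G(S)$ is complete if all $x$-families ($x\in S^*$) are complete. *)

(* Defs.v *)
From mathcomp Require Import all_boot all_order all_algebra.
Set Implicit Arguments. Unset Strict Implicit. Unset Printing Implicit Defensive.
Import GRing.Theory.
Local Open Scope ring_scope.

Definition is_ind (p k d : nat) : Prop :=
  (0 < d)%N /\ (k ^ d = 1 %[mod p])%N /\
  (forall d', (0 < d')%N -> (k ^ d' = 1 %[mod p])%N -> (d <= d')%N).

(* Elements a^i b^j of G(p,n,k) are represented by the pairs (i, j),
   i in Z_p, j in Z_n. *)
Definition Gelt (p n : nat) := ('F_p * 'I_n)%type.

Definition kF (p k : nat) : 'F_p := k%:R.

Definition mu (p n k : nat) (x y : 'F_p) : {ffun Gelt p n -> Gelt p n} :=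
  [ffun g : Gelt p n =>
     let i := g.1 in let j := nat_of_ord g.2 in
     ((x * i * (kF p k) ^+ j - y * ((kF p k) ^+ j - 1)) : 'F_p,
      (Ordinal (leq_ltn_trans (leq0n j) (ltn_ord g.2)) : 'I_n))].

Definition Cfam (p n k : nat) (x y : 'F_p) : {set {ffun Gelt p n -> Gelt p n}} :=
  [set mu n k x (y * z) | z : 'F_p].

Definition in_Sstar (p : nat) (S : {set 'F_p}) (x : 'F_p) : Prop :=
  exists s : seq 'F_p, s <> [::] /\ all (fun t => t \in S) s /\ x = \prod_(t <- s) t.

Definition in_Y (p : nat) (S : {set 'F_p}) (x y : 'F_p) : Prop :=
  exists (ss z s : 'F_p), in_Sstar S ss /\ s \in S /\ x = s * ss /\ y = ss * z.

(* the x-family {C(x,y) : y in Y(x)} is complete iff it contains C(x,1) *)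
Definition family_complete (p n k : nat) (S : {set 'F_p}) (x : 'F_p) : Prop :=
  exists y : 'F_p, in_Y S x y /\ Cfam n k x y = Cfam n k x 1.

Definition Sigma_complete (p n k : nat) (S : {set 'F_p}) : Prop :=
  forall x : 'F_p, in_Sstar S x -> family_complete n k S x.

Definition Rset (p n k : nat) : {set 'F_p} := [set (kF p k) ^+ j - 1 | j : 'I_n].
Definition Lset (p n k : nat) : {set 'F_p} := [set 1 - (kF p k) ^+ j | j : 'I_n].

(* Main.v *)
Require Import Defs.
From mathcomp Require Import all_boot all_order all_algebra all_field.
Import GRing.Theory.
Local Open Scope ring_scope.

Lemma iter_mul_exp (R : pzSemiRingType) (c : R) m : iter m (GRing.mul c) 1 = c ^+ m.
Proof. elim: m => [|m IH] //=; by rewrite IH exprS. Qed.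

Lemma one_in_Sstar p (S : {set 'F_p}) c : prime p -> c \in S -> c != 0 -> in_Sstar S 1.
Proof.
move=> pp cS c0; exists (nseq (p.-1) c); split; last split.
- have : (0 < p.-1)%N by have := prime_gt1 pp; case: (p).
  by case: (p.-1).
- by apply/allP => t /nseqP [-> _].
- rewrite big_nseq iter_mul_exp.
  have hc : c ^+ #|'F_p| = c by rewrite expf_card.
  rewrite card_Fp // in hc.
  have hp : p = (p.-1).+1 by have := prime_gt1 pp; case: (p).
  have e : c ^+ p = c ^+ (p.-1).+1 by rewrite prednK // prime_gt0.
  rewrite e exprS in hc.
  apply: (mulfI c0); by rewrite mulr1 hc.
Qed.

Lemma Cfam_unit p n k (x y : 'F_p) : y != 0 -> Cfam n k x y = Cfam n k x 1.
Proof.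
move=> y0; apply/setP => f; apply/imsetP/imsetP => [[z _ ->]|[z _ ->]].
- by exists (y * z); rewrite ?mul1r.
- exists (y^-1 * z) => //; by rewrite mul1r mulrA divff // mul1r.
Qed.

Lemma generic p n k (S : {set 'F_p}) c : prime p -> 0 \in S -> c \in S -> c != 0 ->
  Sigma_complete n k S.
Proof.
move=> pp S0 cS c0 x [s [sne [sall ->]]].
have one := @one_in_Sstar p S c pp cS c0.
case: (eqVneq (\prod_(t <- s) t) 0) => [e0|ne0].
- exists 1; split; last by [].
  exists 1, 1, 0; split=> //; split=> //; by rewrite e0 mul0r mulr1.
- case: s sne sall ne0 => [//|t r] _ /= /andP [tS rall] ne0.
  rewrite big_cons in ne0 *.
  have r0 : \prod_(u <- r) u != 0 by move: ne0; rewrite mulf_eq0 negb_or => /andP [].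
  exists (\prod_(u <- r) u); split; last exact: Cfam_unit.
  case: r rall r0 ne0 => [|u r'] rall r0 ne0.
  + exists 1, 1, t; split=> //; split=> //; by rewrite big_nil !mulr1.
  + exists (\prod_(v <- u :: r') v), 1, t; split; last by rewrite mulr1.
    by exists (u :: r').
Qed.

Theorem corollary6p2 (p n k : nat) :
  prime p -> (0 < n)%N -> (0 < k)%N -> coprime p (k - 1) -> is_ind p k n ->
  Sigma_complete n k (Rset p n k) /\ Sigma_complete n k (Lset p n k).
Proof.
move=> pp n0 k0 cop [_ [hk hmin]].
have ndvd : ~~ (p %| k - 1)%N by rewrite -prime_coprime.
have n1 : (1 < n)%N.
  case: n n0 hmin hk => [|[|n']] // _ hmin hk.
  rewrite expn1 in hk.
  move: hk => /eqP; rewrite eqn_mod_dvd // => hd.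
  by rewrite hd in ndvd.
have kc : kF p k ^+ 1 - 1 != 0.
  have -> : kF p k ^+ 1 - 1 = (k - 1)%:R :> 'F_p by rewrite expr1 natrB.
  apply/negP => /eqP h.
  have := congr1 (fun z : 'F_p => nat_of_ord z) h; rewrite val_Fp_nat //= => /eqP.
  by rewrite -/(dvdn p (k - 1)) (negbTE ndvd).
split.
- apply: (@generic p n k _ (kF p k ^+ 1 - 1) pp).
  + by apply/imsetP; exists (Ordinal n0); rewrite ?expr0 ?subrr.
  + by apply/imsetP; exists (Ordinal n1).
  + exact kc.
- apply: (@generic p n k _ (1 - kF p k ^+ 1) pp).
  + by apply/imsetP; exists (Ordinal n0); rewrite ?expr0 ?subrr.
  + by apply/imsetP; exists (Ordinal n1).
  + by rewrite -opprB oppr_eq0.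
Qed.
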